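(* Let $\Sigma\in\mathbb{R}^{N\times N}$ be symmetric positive definite, $\mu\in\mathbb{R}^N$, $\gamma\in[0,1]$, and $\mathcal T$ a balanced binary tree whose leaves are the assets $1,\dots,N$. Then the HRP-$\Sigma\mu$ algorithm runs in $O(N^2)$ time and $O(N^2)$ space, the space being dominated by storing $\Sigma$.
   Context: HRP-$\Sigma\mu$ algorithm (inputs $\Sigma,\mu,\mathcal T,\gamma$), defined recursively. At a leaf (asset $i$) return $\hat w=(1)$, $v=\Sigma_{ii}$, $s=\mu_i$. At an internal node $n$ with left and right subtrees having leaf index sets $L,R$: recursively obtain $(\hat w_L,v_L,s_L)$ and $(\hat w_R,v_R,s_R)$; compute $c=\hat w_L^\top\Sigma_{LR}\hat w_R$, $\Delta=v_Lv_R-\gamma^2c^2$, $\alpha_L^{\mathrm{raw}}=(v_Rs_L-\gamma cs_R)/\Delta$, $\alpha_R^{\mathrm{raw}}=(v_Ls_R-\gamma cs_L)/\Delta$, $Z=|\alpha_L^{\mathrm{raw}}|+|\alpha_R^{\mathrm{raw}}|$, $\alpha_k=\alpha_k^{\mathrm{raw}}/Z$; the node representative is the stacked vector $\hat w_n=(\alpha_L\hat w_L,\alpha_R\hat w_R)\in\mathbb{R}^{L\cup R}$, with $v_n=\hat w_n^\top\Sigma_{nn}\hat w_n$ and $s_n=\hat w_n^\top\mu_n$. The output is the representative at the root. Time is counted in arithmetic operations on real numbers; a balanced binary tree has depth $O(\log N)$ with the leaves split as evenly as possible at every node. *)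

(* Defs.v *)
From HB Require Import structures.
From mathcomp Require Import all_boot all_order all_algebra.
From mathcomp Require Import reals.

Set Implicit Arguments.
Unset Strict Implicit.
Unset Printing Implicit Defensive.

Import Order.TTheory GRing.Theory Num.Theory.
Local Open Scope ring_scope.

(* Cost model: a state monad counting                                       *)
(*   - ops  : number of arithmetic operations on reals performed so far     *)
(*   - cur  : number of reals currently stored in the working memory        *)
(*   - peak : maximum of cur over the run (auxiliary space)                 *)
(* Every arithmetic operation (+, -, *, /, |.|) costs one tick.  Named      *)
(* intermediate results (vectors, scalars) are explicitly allocated and     *)
(* freed.  The inputs Sigma (N*N reals) and mu (N reals) are accounted for  *)
(* separately in [hrp_space].                                               *)

Record cstate := CState { ops : nat; cur : nat; peak : nat }.

Definition CM (A : Type) := cstate -> A * cstate.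

Definition cret {A} (a : A) : CM A := fun s => (a, s).
Definition cbind {A B} (m : CM A) (k : A -> CM B) : CM B :=
  fun s => let (a, s') := m s in k a s'.

Notation "x <- m ;; k" := (cbind m (fun x => k))
  (at level 61, m at next level, right associativity).

Definition tick : CM unit :=
  fun s => (tt, CState (ops s).+1 (cur s) (peak s)).
Definition alloc (k : nat) : CM unit :=
  fun s => (tt, CState (ops s) (cur s + k)%N (maxn (peak s) (cur s + k))).
Definition free (k : nat) : CM unit :=
  fun s => (tt, CState (ops s) (cur s - k)%N (peak s)).

Section HRP.
Variable R : realFieldType.

Definition addM (x y : R) : CM R := _ <- tick ;; cret (x + y).
Definition subM (x y : R) : CM R := _ <- tick ;; cret (x - y).
Definition mulM (x y : R) : CM R := _ <- tick ;; cret (x * y).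
Definition divM (x y : R) : CM R := _ <- tick ;; cret (x / y).
Definition absM (x : R) : CM R := _ <- tick ;; cret `|x|.

Fixpoint sumM {A} (f : A -> CM R) (xs : seq A) : CM R :=
  match xs with
  | [::] => cret 0
  | x :: xs' => a <- f x ;; b <- sumM f xs' ;; addM a b
  end.

Fixpoint mapM {A B} (f : A -> CM B) (xs : seq A) : CM (seq B) :=
  match xs with
  | [::] => cret [::]
  | x :: xs' => y <- f x ;; ys <- mapM f xs' ;; cret (y :: ys)
  end.

Variable N : nat.

(* A sparse representative: list of (asset, weight); a vector in R^{leaves}. *)
Definition rep := seq ('I_N * R).

Definition bilinM (Sigma : 'M[R]_N) (u w : rep) : CM R :=
  sumM (fun p => t <- sumM (fun q => mulM (Sigma p.1 q.1) q.2) w ;; mulM p.2 t) u.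

Definition dotM (mu : 'cV[R]_N) (w : rep) : CM R :=
  sumM (fun p => mulM p.2 (mu p.1 ord0)) w.

Definition scaleM (a : R) (w : rep) : CM rep :=
  mapM (fun p => y <- mulM a p.2 ;; cret (p.1, y)) w.

End HRP.

Inductive tree (N : nat) : Type :=
| Leaf of 'I_N
| Node of tree N & tree N.
Arguments Leaf {N}.
Arguments Node {N}.

Fixpoint leaves {N} (t : tree N) : seq 'I_N :=
  match t with
  | Leaf i => [:: i]
  | Node l r => leaves l ++ leaves r
  end.

Fixpoint balanced {N} (t : tree N) : bool :=
  match t with
  | Leaf _ => true
  | Node l r =>
      [&& balanced l, balanced r,
          (size (leaves l) <= (size (leaves r)).+1)%N &
          (size (leaves r) <= (size (leaves l)).+1)%N]
  end.

Section HRPalg.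
Variables (R : realFieldType) (N : nat).
Variables (Sigma : 'M[R]_N) (mu : 'cV[R]_N) (gamma : R).

Fixpoint hrp (t : tree N) : CM (rep R N * R * R) :=
  match t with
  | Leaf i => _ <- alloc 3 ;; cret ([:: (i, 1)], Sigma i i, mu i ord0)
  | Node l r =>
      resL <- hrp l ;;
      resR <- hrp r ;;
      let '(wL, vL, sL) := resL in
      let '(wR, vR, sR) := resR in
      c <- bilinM Sigma wL wR ;; _ <- alloc 1 ;;
      g2 <- mulM gamma gamma ;; cc <- mulM c c ;; g2cc <- mulM g2 cc ;;
      vv <- mulM vL vR ;; Delta <- subM vv g2cc ;; _ <- alloc 1 ;;
      gc <- mulM gamma c ;;
      t1 <- mulM vR sL ;; t2 <- mulM gc sR ;; d1 <- subM t1 t2 ;;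
      aLr <- divM d1 Delta ;; _ <- alloc 1 ;;
      t3 <- mulM vL sR ;; t4 <- mulM gc sL ;; d2 <- subM t3 t4 ;;
      aRr <- divM d2 Delta ;; _ <- alloc 1 ;;
      z1 <- absM aLr ;; z2 <- absM aRr ;; Z <- addM z1 z2 ;; _ <- alloc 1 ;;
      aL <- divM aLr Z ;; aR <- divM aRr Z ;; _ <- alloc 2 ;;
      wL' <- scaleM aL wL ;; wR' <- scaleM aR wR ;;
      _ <- alloc (size wL + size wR) ;;
      let wn := wL' ++ wR' in
      vn <- bilinM Sigma wn wn ;; sn <- dotM mu wn ;; _ <- alloc 2 ;;
      _ <- free ((size wL + 2) + (size wR + 2) + 7) ;;
      cret (wn, vn, sn)
  end.

Definition hrp_run (T : tree N) := hrp T (CState 0 0 0).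

Definition hrp_time (T : tree N) : nat := ops (hrp_run T).2.
Definition hrp_aux_space (T : tree N) : nat := peak (hrp_run T).2.
Definition hrp_space (T : tree N) : nat := (N * N + N + hrp_aux_space T)%N.

End HRPalg.

(* Main.v *)
Require Import Defs.
From HB Require Import structures.
From mathcomp Require Import all_boot all_order all_algebra.
From mathcomp Require Import reals.
From mathcomp Require Import zify.
Import Order.TTheory GRing.Theory Num.Theory.


Arguments mulM : simpl never.
Arguments addM : simpl never.
Arguments subM : simpl never.
Arguments divM : simpl never.
Arguments absM : simpl never.
Arguments bilinM : simpl never.
Arguments dotM : simpl never.
Arguments scaleM : simpl never.
Arguments alloc : simpl never.
Arguments Defs.free : simpl never.
Arguments tick : simpl never.

Section Cost.
Variable R : realFieldType.

Definition tcP {A} (P : A -> Prop) (m : CM A) (k : nat) :=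
  exists v, P v /\ forall s, m s = (v, CState (ops s + k) (cur s) (peak s)).

Lemma tc_ret {A} (P : A -> Prop) a : P a -> tcP P (cret a) 0.
Proof. by move=> Pa; exists a; split=> // -[o c p]; rewrite addn0. Qed.

Lemma tc_bind {A B} (P : A -> Prop) (Q : B -> Prop) m f k j :
  tcP P m k -> (forall a, P a -> tcP Q (f a) j) -> tcP Q (cbind m f) (k + j).
Proof.
move=> [v [Pv Hm]] Hf; have [w [Qw Hw]] := Hf v Pv.
exists w; split=> // s; rewrite /cbind Hm Hw /=; do 2 f_equal; lia.
Qed.

Lemma tc_tick1 (x : R) : tcP (fun _ => True) (cret x) 0.
Proof. exact: tc_ret. Qed.

Lemma mulME (x y : R) s : mulM x y s = ((x * y)%R, CState (ops s).+1 (cur s) (peak s)).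
Proof. by []. Qed.
Lemma addME (x y : R) s : addM x y s = ((x + y)%R, CState (ops s).+1 (cur s) (peak s)).
Proof. by []. Qed.
Lemma subME (x y : R) s : subM x y s = ((x - y)%R, CState (ops s).+1 (cur s) (peak s)).
Proof. by []. Qed.
Lemma divME (x y : R) s : divM x y s = ((x / y)%R, CState (ops s).+1 (cur s) (peak s)).
Proof. by []. Qed.
Lemma absME (x : R) s : absM x s = (`|x|%R, CState (ops s).+1 (cur s) (peak s)).
Proof. by []. Qed.
Lemma allocE k s : alloc k s = (tt, CState (ops s) (cur s + k) (maxn (peak s) (cur s + k))).
Proof. by []. Qed.
Lemma freeE k s : Defs.free k s = (tt, CState (ops s) (cur s - k) (peak s)).
Proof. by []. Qed.

Lemma tc_mul (x y : R) : tcP (fun _ => True) (mulM x y) 1.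
Proof. by exists (x * y)%R; split=> // s; rewrite mulME addn1. Qed.
Lemma tc_add (x y : R) : tcP (fun _ => True) (addM x y) 1.
Proof. by exists (x + y)%R; split=> // s; rewrite addME addn1. Qed.

Lemma tc_sum {A} (f : A -> CM R) k xs :
  (forall x, tcP (fun _ => True) (f x) k) ->
  tcP (fun _ => True) (sumM f xs) ((k + 1) * size xs).
Proof.
move=> Hf; elim: xs => [|x xs IH] /=.
  by rewrite muln0; apply: tc_ret.
have -> : ((k + 1) * (size xs).+1 = k + ((k + 1) * size xs + 1))%N by rewrite mulnS; lia.
apply: tc_bind (Hf x) _ => a _.
apply: tc_bind IH _ => b _; exact: tc_add.
Qed.

Variable N : nat.

Lemma tc_bilin (S : 'M[R]_N) (u w : rep R N) :
  tcP (fun _ => True) (bilinM S u w) ((2 * size w + 1 + 1) * size u).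
Proof.
rewrite /bilinM; apply: tc_sum => p.
have -> : 2 * size w + 1 = (1 + 1) * size w + 1 by lia.
apply: tc_bind; first by apply: tc_sum => q; exact: tc_mul.
move=> a _; exact: tc_mul.
Qed.

Lemma tc_dot (mu : 'cV[R]_N) (w : rep R N) :
  tcP (fun _ => True) (dotM mu w) ((1 + 1) * size w).
Proof. by apply: tc_sum => p; exact: tc_mul. Qed.

Lemma tc_scale (a : R) (w : rep R N) :
  tcP (fun v : rep R N => size v = size w) (scaleM a w) (size w).
Proof.
rewrite /scaleM; elim: w => [|p w [ys [Hys IH]]] /=; first exact: tc_ret.
exists ((p.1, (a * p.2)%R) :: ys); split; first by rewrite /= Hys.
move=> s; rewrite /cbind mulME /= IH /= /cret addSn addnS //.
Qed.

End Cost.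

Lemma leaves_gt0 {N} (t : tree N) : (0 < size (leaves t))%N.
Proof. elim: t => [i|l IHl r IHr] //=; rewrite size_cat; lia. Qed.

Section HrpInv.
Variables (R : realFieldType) (N : nat) (Sigma : 'M[R]_N) (mu : 'cV[R]_N) (gamma : R).

Lemma hrp_inv (t : tree N) s :
  let n := size (leaves t) in
  let: (res, s') := hrp Sigma mu gamma t s in
  [/\ size res.1.1 = n, cur s' = cur s + n + 2,
      peak s' <= maxn (peak s) (cur s + 4 * n + 13),
      ops s <= ops s' &
      (balanced t -> ops s' <= ops s + 56 * n ^ 2)].
Proof.
elim: t s => [i|l IHl r IHr] s /=.
  split=> //; lia.
rewrite {1}/cbind.
have := IHl s; case: (hrp Sigma mu gamma l s) => [[[wL vL] sL] s1] /= [HwL Hc1 Hp1 Ho1 Ht1].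
rewrite {1}/cbind.
have := IHr s1; case: (hrp Sigma mu gamma r s1) => [[[wR vR] sR] s2] /= [HwR Hc2 Hp2 Ho2 Ht2].
rewrite /=. rewrite {1}/cbind.
have [c [_ ->]] := @tc_bilin R N Sigma wL wR.
rewrite /=.
do 25 (rewrite {1}/cbind ?mulME ?subME ?divME ?absME ?addME ?allocE /=).
rewrite {1}/cbind.
set aL := (X in scaleM X wL).
have [wL' [HL' ->]] := @tc_scale R N aL wL.
rewrite /= {1}/cbind.
set aR := (X in scaleM X wR).
have [wR' [HR' ->]] := @tc_scale R N aR wR.
rewrite /= {1}/cbind allocE /= {1}/cbind.
have [vn [_ ->]] := @tc_bilin R N Sigma (wL' ++ wR') (wL' ++ wR').
rewrite /= {1}/cbind.
have [sn [_ ->]] := @tc_dot R N mu (wL' ++ wR').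
rewrite /=.
rewrite !size_cat HL' HR' HwL HwR in Hc2 Hp2 Ht2 Ho2 *.
have gl := leaves_gt0 l; have gr := leaves_gt0 r.
set nL := size (leaves l) in Hc1 Hp1 Ht1 Hc2 Hp2 Ht2 gl *.
set nR := size (leaves r) in Hc1 Hp1 Ht1 Hc2 Hp2 Ht2 gr *.
split.
- by [].
- lia.
- lia.
- lia.
move=> /and4P [bl br b1 b2].
have {Ht1} Ht1 := Ht1 bl; have {Ht2} Ht2 := Ht2 br.
have h1 : nL * nL <= nL * nR + nL by rewrite -mulnSr leq_mul2l b1 orbT.
have h2 : nR * nR <= nL * nR + nR by rewrite mulnC -mulnSr leq_mul2l b2 orbT.
have h3 : 1 <= nL * nR by rewrite muln_gt0 gl gr.
have h4 : nL <= nL * nR by rewrite leq_pmulr.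
have h5 : nR <= nL * nR by rewrite leq_pmull.
rewrite !expnS !expn0 !muln1 in Ht1 Ht2 *.
nia.
Qed.
End HrpInv.

Local Open Scope ring_scope.

Theorem mainTheorem16 :
  exists C : nat,
  forall (R : realType) (N : nat) (Sigma : 'M[R]_N) (mu : 'cV[R]_N)
         (gamma : R) (T : tree N),
    Sigma^T = Sigma ->
    (forall x : 'cV[R]_N, x != 0 -> 0 < (x^T *m Sigma *m x) ord0 ord0) ->
    0 <= gamma <= 1 ->
    balanced T ->
    perm_eq (leaves T) (enum 'I_N) ->
    [/\ (hrp_time Sigma mu gamma T <= C * N ^ 2)%N,
        (hrp_space Sigma mu gamma T <= C * N ^ 2)%N &
        (hrp_aux_space Sigma mu gamma T <= C * N)%N].
Proof.
exists 56%N => R N Sigma mu gamma T _ _ _ bT pT.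
have hn : size (leaves T) = N by rewrite (perm_size pT) size_enum_ord.
have g := leaves_gt0 T; rewrite hn in g.
have := @hrp_inv R N Sigma mu gamma T (CState 0 0 0).
rewrite /hrp_time /hrp_space /hrp_aux_space /hrp_run.
case: (hrp Sigma mu gamma T (CState 0 0 0)) => [res s'] /=.
rewrite hn => -[_ _ Hp _ Ht]; have {}Ht := Ht bT.
rewrite !expnS expn0 muln1 in Ht *.
split; nia.
Qed.
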